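(* Let $\Gamma$ be a metric graph or a tropical curve with a real structure and let $D$ be a real divisor on $\Gamma$ with $\dim|D|\ge r\ge1$. Then for each effective real divisor $E$ on $\Gamma$ with $\deg E=r$ there exists a real divisor $D'\in|D|$ with $D'\ge E$.
   Context: A metric graph is a compact connected metric space locally isometric to star-shaped sets $\{te^{2k\pi i/n}:0\le t<r\}\subset\mathbb C$; its vertices are the points of local valence $\ne2$ and its edges the components of the complement of the vertex set. A tropical curve is the union of a metric graph and finitely many unbounded edges isometric to $[0,\infty]$, each attached at its point $0$ to the metric graph. A real structure is an isometric involution $\iota$; $\overline p=\iota(p)$. A divisor on $\Gamma$ is a finite formal $\mathbb Z$-combination $D=\sum D(p)p$ of points; $\overline D(p)=D(\overline p)$ and $D$ is real if $\overline D=D$. A rational function is a continuous $f:\Gamma\to\mathbb R$ which on each edge (identified isometrically with an interval in $[0,+\infty]$) is piecewise affine with finitely many pieces and integer slopes; $\Delta(f)(p)$ is the sum of the slopes of $f$ in all directions emanating from $p$, and $\Delta(f)=\sum_p\Delta(f)(p)p$. $D_1\sim D_2$ iff $D_2-D_1=\Delta(f)$ for a rational function $f$; $|D|=\{D'\ge0:D'\sim D\}$; $\dim|D|$ is $-1$ if $|D|=\emptyset$ and otherwise the maximal $r$ such that for each effective $E$ of degree $r$ there is $D'\in|D|$ with $D'-E\ge0$. *)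

(* Defs.v *)
From HB Require Import structures.
From mathcomp Require Import all_boot all_order all_algebra.
From mathcomp Require Import reals.
Set Implicit Arguments. Unset Strict Implicit. Unset Printing Implicit Defensive.
Import Order.TTheory GRing.Theory Num.Theory.
Local Open Scope ring_scope.

(* A tropical curve, given through a combinatorial model:
   a finite connected graph (vertices V, bounded edges E, possibly loops and
   multiple edges) with positive edge lengths, plus finitely many unbounded
   edges (legs) L, each isometric to [0,+oo] and attached at its point 0 to
   a vertex.  A metric graph is the case where L is empty. *)
Record tcurve (R : realType) := TCurve {
  V : finType;
  E : finType;
  L : finType;
  src : E -> V;
  tgt : E -> V;
  len : E -> R;
  len_gt0 : forall e, 0 < len e;
  leg_at : L -> V;
  tc_connected : forall u v : V,
    connect [rel x y | [exists e, ((src e == x) && (tgt e == y))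
                                   || ((src e == y) && (tgt e == x))]] u v
}.

Section Curve.
Variables (R : realType) (G : tcurve R).

(* Points: vertices, interior points (e,t) of bounded edges (0 < t < len e),
   interior points (l,t) of legs (0 < t), and the points at infinity of legs. *)
Definition pt := (V G + (E G * R) + (L G * R) + L G)%type.
Definition PV (v : V G) : pt := inl (inl (inl v)).
Definition PE (e : E G) (t : R) : pt := inl (inl (inr (e, t))).
Definition PL (l : L G) (t : R) : pt := inl (inr (l, t)).
Definition PInf (l : L G) : pt := inr l.

Definition valid (p : pt) : bool :=
  match p with
  | inl (inl (inl _)) => true
  | inl (inl (inr (e, t))) => (0 < t) && (t < len e)
  | inl (inr (_, t)) => 0 < t
  | inr _ => true
  end.

Definition edge_pt (e : E G) (t : R) : pt :=
  if t <= 0 then PV (src e) else if len e <= t then PV (tgt e) else PE e t.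
Definition leg_pt (l : L G) (t : R) : pt :=
  if t <= 0 then PV (leg_at l) else PL l t.

Definition pw_affine (g : R -> R) (a b : R) : Prop :=
  exists (n : nat) (x : nat -> R) (s : nat -> int),
    x 0%N = a /\ x n = b /\ (forall i, (i < n)%N -> x i < x i.+1) /\
    (forall i, (i < n)%N -> forall y, x i <= y <= x i.+1 ->
        g y = g (x i) + (s i)%:~R * (y - x i)).

Definition pw_affine_ray (g : R -> R) (a : R) : Prop :=
  exists (n : nat) (x : nat -> R) (s : nat -> int),
    x 0%N = a /\ (forall i, (i < n)%N -> x i < x i.+1) /\
    (forall i, (i < n)%N -> forall y, x i <= y <= x i.+1 ->
        g y = g (x i) + (s i)%:~R * (y - x i)) /\
    (forall y, x n <= y -> g y = g (x n) + (s n)%:~R * (y - x n)).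

(* rational function: continuous real valued, piecewise affine with integer
   slopes on every edge and leg (continuity at vertices is built in since
   vertices are shared points; continuity at the points at infinity is
   stated explicitly) *)
Definition rational (f : pt -> R) : Prop :=
  (forall e, pw_affine (fun t => f (edge_pt e t)) 0 (len e)) /\
  (forall l, pw_affine_ray (fun t => f (leg_pt l t)) 0 /\
     forall eps, 0 < eps -> exists M : R, forall t, M <= t ->
        `|f (leg_pt l t) - f (PInf l)| < eps).

Definition slope (f : pt -> R) (gam : R -> pt) (s : int) : Prop :=
  exists2 d : R, 0 < d & forall h, 0 < h < d -> f (gam h) = f (gam 0) + s%:~R * h.

(* slope of f at the point at infinity of leg l, in the direction pointing
   towards the finite part *)
Definition inf_slope (f : pt -> R) (l : L G) (s : int) : Prop :=
  exists M : R, forall t, M <= t ->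
    f (leg_pt l t) = f (leg_pt l M) - s%:~R * (t - M).

Definition is_lap (f : pt -> R) (D : pt -> int) : Prop :=
  (forall v : V G, exists (a b : E G -> int) (c : L G -> int),
     (forall e, src e = v -> slope f (fun h => edge_pt e h) (a e)) /\
     (forall e, tgt e = v -> slope f (fun h => edge_pt e (len e - h)) (b e)) /\
     (forall l, leg_at l = v -> slope f (fun h => leg_pt l h) (c l)) /\
     D (PV v) = \sum_(e | src e == v) a e + \sum_(e | tgt e == v) b e
                + \sum_(l | leg_at l == v) c l) /\
  (forall e t, 0 < t < len e -> exists a b : int,
     slope f (fun h => edge_pt e (t + h)) a /\
     slope f (fun h => edge_pt e (t - h)) b /\ D (PE e t) = a + b) /\
  (forall l t, 0 < t -> exists a b : int,
     slope f (fun h => leg_pt l (t + h)) a /\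
     slope f (fun h => leg_pt l (t - h)) b /\ D (PL l t) = a + b) /\
  (forall l, exists s : int, inf_slope f l s /\ D (PInf l) = s).

Definition is_div (D : pt -> int) : Prop :=
  (exists s : seq pt, forall p, D p != 0 -> p \in s) /\
  (forall p, ~~ valid p -> D p = 0).

Definition effective (D : pt -> int) : Prop := forall p, 0 <= D p.

Definition deg_is (D : pt -> int) (n : int) : Prop :=
  exists s : seq pt, [/\ uniq s, (forall p, D p != 0 -> p \in s)
                       & \sum_(p <- s) D p = n].

Definition in_linsys (D D' : pt -> int) : Prop :=
  [/\ is_div D', effective D' &
      exists f, rational f /\ is_lap f (fun p => D' p - D p)].

Definition rank_prop (D : pt -> int) (r : nat) : Prop :=
  forall Ef, is_div Ef -> effective Ef -> deg_is Ef r%:Z ->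
    exists D', in_linsys D D' /\ forall p, Ef p <= D' p.

(* dim |D| >= r  (dim |D| being -1 if |D| is empty, otherwise the maximal
   r0 with rank_prop D r0) *)
Definition dim_ge (D : pt -> int) (r : nat) : Prop :=
  (exists D', in_linsys D D') /\
  exists r0 : nat, (r <= r0)%N /\ rank_prop D r0.

End Curve.

(* A real structure: an isometric involution, given as an involutive
   length-preserving automorphism of the model (edges may be reversed). *)
Definition act_pt (R : realType) (G : tcurve R) (sV : V G -> V G)
    (sE : E G -> E G) (flip : E G -> bool) (sL : L G -> L G) (p : pt G) : pt G :=
  match p with
  | inl (inl (inl v)) => PV (sV v)
  | inl (inl (inr (e, t))) => PE (sE e) (if flip e then len e - t else t)
  | inl (inr (l, t)) => PL (sL l) t
  | inr l => PInf (sL l)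
  end.

Record real_structure (R : realType) (G : tcurve R) := RealStr {
  sV : V G -> V G;
  sE : E G -> E G;
  flip : E G -> bool;
  sL : L G -> L G;
  sE_len : forall e, len (sE e) = len e;
  sE_ends : forall e,
    if flip e then src (sE e) = sV (tgt e) /\ tgt (sE e) = sV (src e)
    else src (sE e) = sV (src e) /\ tgt (sE e) = sV (tgt e);
  sL_at : forall l, leg_at (sL l) = sV (leg_at l);
  act_invol : forall p, act_pt sV sE flip sL (act_pt sV sE flip sL p) = p
}.

Definition iota (R : realType) (G : tcurve R) (s : real_structure G) :
  pt G -> pt G := act_pt (sV s) (sE s) (flip s) (sL s).

Definition is_real (R : realType) (G : tcurve R) (s : real_structure G)
  (D : pt G -> int) : Prop := forall p, D (iota s p) = D p.

(* Main.v *)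
Require Import Defs.
From HB Require Import structures.
From mathcomp Require Import all_boot all_order all_algebra.
From mathcomp Require Import reals.
From mathcomp Require Import ring lra zify.
From Stdlib Require Import FunctionalExtensionality ClassicalEpsilon.
Import Defs.
Import Order.TTheory GRing.Theory Num.Theory.
Local Open Scope ring_scope.
Set Implicit Arguments. Unset Strict Implicit.

Section PW.
Variable R : realType.

Definition aff (g : R -> R) (a c : R) (s : int) :=
  forall y, a <= y <= c -> g y = g a + s%:~R * (y - a).

Inductive pw (g : R -> R) : R -> R -> Prop :=
| pw0 a : pw g a a
| pwS a c b (s : int) : a < c -> aff g a c s -> pw g c b -> pw g a b.

Lemma pw_le g a b : pw g a b -> a <= b.
Proof. elim=> [a0|a0 c b0 s ac _ _ cb]; [exact: lexx|lra]. Qed.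

Lemma pw_cat g a c b : pw g a c -> pw g c b -> pw g a b.
Proof. elim=> [a0 h //|a0 c0 b0 s ac ha _ IH /IH]; exact: (pwS ac ha). Qed.

Lemma pw_aff g a c s : a <= c -> aff g a c s -> pw g a c.
Proof.
rewrite le_eqVlt => /orP [/eqP -> _|ac h]; first exact: pw0.
exact: (pwS ac h (pw0 _ _)).
Qed.

Lemma aff_sub g a c s u v : aff g a c s -> a <= u -> v <= c -> aff g u v s.
Proof.
move=> h au vc y /andP[uy yv].
rewrite (h y); last by apply/andP; split; lra.
rewrite (h u); last by apply/andP; split; lra.
ring.
Qed.

Lemma pw_split g a b c : pw g a b -> a <= c <= b -> pw g a c /\ pw g c b.
Proof.
move=> H; elim: H c => [a0 c /andP[h1 h2]|a0 c0 b0 s ac ha H IH c /andP[h1 h2]].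
  have -> : c = a0 by apply/eqP; rewrite eq_le h2 h1.
  split; exact: pw0.
have cb := pw_le H.
case: (lerP c c0) => cc0.
  split; first exact: (pw_aff h1 (aff_sub ha (lexx _) cc0)).
  apply: pw_cat H; apply: pw_aff cc0 (aff_sub ha h1 (lexx _)).
have [H1 H2] : pw g c0 c /\ pw g c b0 by apply: IH; rewrite (ltW cc0) h2.
split=> //; exact: pwS ac ha H1.
Qed.

Lemma pw_ext g g' a b : pw g a b -> (forall y, a <= y <= b -> g y = g' y) -> pw g' a b.
Proof.
elim=> [a0 _|a0 c b0 s ac ha H IH e]; first exact: pw0.
have cb := pw_le H.
apply: (pwS ac).
  move=> y /andP[h1 h2].
  have e1 : g y = g' y by apply: e; apply/andP; split; lra.
  have e2 : g a0 = g' a0 by apply: e; apply/andP; split; lra.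
  rewrite -e1 -e2; apply: ha; apply/andP; split; lra.
apply: IH => y /andP[h1 h2]; apply: e; apply/andP; split; lra.
Qed.

Lemma pw_of g a b : pw_affine g a b -> pw g a b.
Proof.
case=> n; elim: n a => [|n IH] a [x [s [x0 [xn [inc h]]]]].
  by rewrite -x0 xn; exact: pw0.
have l0 := inc 0%N isT.
apply: (@pwS _ a (x 1%N) b (s 0%N)); first by rewrite -x0.
  by move=> y hy; rewrite -x0 (h 0%N isT y) // x0.
apply: IH; exists (fun i => x i.+1), (fun i => s i.+1); split=> //; split=> //.
split; first by move=> i hi; apply: inc.
by move=> i hi; apply: h.
Qed.

Lemma of_pw g a b : pw g a b -> pw_affine g a b.
Proof.
elim=> [a0|a0 c b0 s ac ha _ [n [x [t [x0 [xn [inc h]]]]]]].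
  by exists 0%N, (fun _ => a0), (fun _ => 0); do !split=> //.
exists n.+1, (fun i => if i is j.+1 then x j else a0),
  (fun i => if i is j.+1 then t j else s).
split=> //; split=> //; split.
  by case=> [|i] hi //=; [rewrite x0 | apply: inc].
case=> [|i] hi y hy /=; first by apply: ha; rewrite -x0.
exact: h.
Qed.

Lemma pw_refl g L a b : pw g a b ->
  pw (fun t => g (L - t)) (L - b) (L - a).
Proof.
elim=> [a0|a0 c b0 s ac ha H IH]; first exact: pw0.
apply: pw_cat IH _; apply: (@pw_aff _ _ _ (- s)); first lra.
move=> y /andP[h1 h2].
rewrite (ha (L - y)); last by apply/andP; split; lra.
rewrite (ha (L - (L - c))); last by apply/andP; split; lra.
rewrite mulrNz; ring.
Qed.


Implicit Types f g : R -> R.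

Definition mxf f g := fun y : R => Num.max (f y) (g y).

Lemma pw_mxC f g a b : pw (mxf f g) a b -> pw (mxf g f) a b.
Proof. by move=> H; apply: (pw_ext H) => y _; rewrite /mxf maxC. Qed.

Lemma aff_sign (dA dB k w z : R) : 0 <= dA -> 0 <= dB -> dB = dA + k * w ->
  0 <= z -> z <= w -> 0 <= dA + k * z.
Proof.
move=> hA hB e hz hzw.
have key : w * (dA + k * z) = (w - z) * dA + z * dB by rewrite e; ring.
have p1 : 0 <= (w - z) * dA by apply: mulr_ge0; lra.
have p2 : 0 <= z * dB by apply: mulr_ge0.
case: (ltrgtP w 0) => hw; first lra.
  by rewrite -(pmulr_rge0 _ hw) key addr_ge0.
have -> : z = 0 by lra.
by rewrite mulr0 addr0.
Qed.

Lemma piece_max f g u v s t : u <= v -> aff f u v s -> aff g u v t ->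
  g u <= f u -> g v <= f v -> pw (mxf f g) u v.
Proof.
move=> uv hf hg hu hv; apply: (@pw_aff _ _ _ s uv) => y /andP[h1 h2].
have vv : u <= v <= v by rewrite uv lexx.
have fb := hf v vv; have gb := hg v vv.
have yy : u <= y <= v by rewrite h1 h2.
have fy := hf y yy; have gy := hg y yy.
have gyf : g y <= f y.
  have := @aff_sign (f u - g u) (f v - g v) (s%:~R - t%:~R) (v - u) (y - u).
  rewrite subr_ge0 hu subr_ge0 hv => /(_ isT isT) H.
  have : 0 <= f u - g u + (s%:~R - t%:~R) * (y - u).
    by apply: H; [rewrite fb gb; ring | lra | lra].
  rewrite fy gy; lra.
by rewrite /mxf (max_l gyf) (max_l hu).
Qed.

Lemma max_aff_core f g a b s t : a <= b -> aff f a b s -> aff g a b t ->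
  g a <= f a -> pw (mxf f g) a b.
Proof.
move=> ab hf hg ha.
case: (lerP (g b) (f b)) => hb; first exact: (piece_max ab hf hg ha hb).
have bb : a <= b <= b by rewrite ab lexx.
have fb := hf b bb; have gb := hg b bb.
have kb : 0 < (t%:~R - s%:~R) * (b - a) by rewrite fb gb in hb; lra.
have kp : 0 < (t%:~R - s%:~R : R).
  rewrite ltNge; apply/negP => hk.
  have : (t%:~R - s%:~R) * (b - a) <= 0 by apply: mulr_le0_ge0 => //; lra.
  lra.
pose c := a + (f a - g a) / (t%:~R - s%:~R).
have ck : (t%:~R - s%:~R) * (c - a) = f a - g a.
  by rewrite /c addrAC subrr add0r mulrC divfK // gt_eqF.
have ac : a <= c.
  rewrite /c lerDl; apply: divr_ge0; lra.
have cb : c <= b.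
  have : (f a - g a) / (t%:~R - s%:~R) <= b - a.
    by rewrite ler_pdivrMr // mulrC; lra.
  rewrite /c; lra.
clearbody c.
have cc : a <= c <= b by rewrite ac cb.
have fc := hf c cc; have gc := hg c cc.
have dc : f c = g c by rewrite fc gc; lra.
apply: pw_cat.
  apply: (piece_max ac (aff_sub hf (lexx _) cb) (aff_sub hg (lexx _) cb)) => //.
  by rewrite dc.
apply: pw_mxC; apply: (piece_max cb (aff_sub hg ac (lexx _)) (aff_sub hf ac (lexx _))).
  by rewrite dc.
exact: ltW.
Qed.

Lemma max_aff f g a b s t : a <= b -> aff f a b s -> aff g a b t -> pw (mxf f g) a b.
Proof.
move=> ab hf hg; case: (lerP (g a) (f a)) => ha; first exact: max_aff_core hf hg ha.
apply: pw_mxC; exact: max_aff_core hg hf (ltW ha).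
Qed.

Lemma max_pw1 f g a b s : aff f a b s -> pw g a b -> pw (mxf f g) a b.
Proof.
move=> hf H; elim: H s hf => [a0 s _|a0 c b0 t ac hg H IH s hf]; first exact: pw0.
have cb := pw_le H.
apply: pw_cat (max_aff (ltW ac) (aff_sub hf (lexx _) cb) hg) _.
apply: (IH s); exact: aff_sub hf (ltW ac) (lexx _).
Qed.

Lemma max_pw f g a b : pw f a b -> pw g a b -> pw (mxf f g) a b.
Proof.
move=> H; elim: H g => [a0 g _|a0 c b0 s ac hf H IH g Hg]; first exact: pw0.
have cb := pw_le H.
have cc : a0 <= c <= b0 by rewrite (ltW ac) cb.
have [H1 H2] := pw_split (c:=c) Hg cc.
exact: pw_cat (max_pw1 hf H1) (IH _ H2).
Qed.

Definition tail g b (s : int) := forall y, b <= y -> g y = g b + s%:~R * (y - b).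
Definition ray g a := exists b s, pw g a b /\ tail g b s.

Lemma ray_of g a : pw_affine_ray g a -> ray g a.
Proof.
case=> n [x [s [x0 [inc [h t]]]]]; exists (x n), (s n); split=> //.
by apply: pw_of; exists n, x, s.
Qed.

Lemma of_ray g a : ray g a -> pw_affine_ray g a.
Proof.
case=> b [t [/of_pw [n [x [s [x0 [xn [inc h]]]]]] ht]].
exists n, x, (fun i => if i == n then t else s i); split=> //; split=> //; split.
  by move=> i hi y hy; rewrite (ltn_eqF hi); apply: h.
by rewrite eqxx xn.
Qed.

Lemma tail_ext g b s B : tail g b s -> b <= B -> aff g b B s /\ tail g B s.
Proof.
move=> h bB; split; first by move=> y /andP[h1 _]; apply: h.
move=> y By; rewrite (h y) ?(h B) //; [ring|lra].
Qed.

Lemma tail_max_core f g m B s1 s2 : (forall y, m y = Num.max (f y) (g y)) ->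
  tail f B s1 -> tail g B s2 -> (s2 <= s1) ->
  exists b s, B <= b /\ pw m B b /\ tail m b s.
Proof.
move=> em hf hg s21.
have s21' : (s2%:~R : R) <= s1%:~R by rewrite ler_int.
case: (lerP (g B) (f B)) => hB.
  exists B, s1; split; first exact: lexx.
  split; first exact: pw0.
  move=> y By; have e : g y <= f y.
    rewrite (hf y By) (hg y By).
    have : s2%:~R * (y - B) <= s1%:~R * (y - B) by apply: ler_wpM2r => //; lra.
    lra.
  by rewrite !em (max_l e) (max_l hB) hf.
case: (lerP (s1%:~R : R) s2%:~R) => hs.
  exists B, s2; split; first exact: lexx.
  split; first exact: pw0.
  move=> y By; have e : f y <= g y.
    rewrite (hf y By) (hg y By).
    have : s1%:~R * (y - B) <= s2%:~R * (y - B) by apply: ler_wpM2r => //; lra.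
    lra.
  by rewrite !em (max_r e) (max_r (ltW hB)) hg.
have kp : 0 < (s1%:~R - s2%:~R : R) by lra.
pose c := B + (g B - f B) / (s1%:~R - s2%:~R).
have ck : (s1%:~R - s2%:~R) * (c - B) = g B - f B.
  by rewrite /c addrAC subrr add0r mulrC divfK // gt_eqF.
have Bc : B <= c by rewrite /c lerDl; apply: divr_ge0; lra.
clearbody c.
exists c, s1; split=> //; split.
  have [af _] := tail_ext hf Bc; have [ag _] := tail_ext hg Bc.
  apply: pw_ext (max_aff Bc af ag) _ => y _; by rewrite em.
have [_ tf] := tail_ext hf Bc.
have ge : forall y, c <= y -> g y <= f y.
  move=> y cy; have By : B <= y by lra.
  rewrite (hf y By) (hg y By).
  have : 0 <= (s1%:~R - s2%:~R) * (y - c) by apply: mulr_ge0; lra.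
  lra.
move=> y cy.
by rewrite !em (max_l (ge y cy)) (max_l (ge c (lexx c))) tf.
Qed.

Lemma ray_max f g a : ray f a -> ray g a -> ray (mxf f g) a.
Proof.
case=> b1 [s1 [p1 t1]] [b2 [s2 [p2 t2]]].
set B := Num.max b1 b2.
have h1 : b1 <= B by rewrite le_max lexx.
have h2 : b2 <= B by rewrite le_max lexx orbT.
have [a1 t1'] := tail_ext t1 h1; have [a2 t2'] := tail_ext t2 h2.
have P1 : pw f a B by apply: pw_cat p1 (pw_aff h1 a1).
have P2 : pw g a B by apply: pw_cat p2 (pw_aff h2 a2).
have PM := max_pw P1 P2.
have [b [s [Bb [pb tb]]]] : exists b s, B <= b /\ pw (mxf f g) B b /\ tail (mxf f g) b s.
  case: (lerP s2 s1) => hs; first exact: tail_max_core t1' t2' hs.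
  apply: (tail_max_core (f:=g) (g:=f)) t2' t1' (ltW hs) => y; by rewrite /mxf maxC.
exists b, s; split=> //; exact: pw_cat PM pb.
Qed.

Definition locaff g t := exists (s : int) (d : R), 0 < d /\
  forall y, t - d < y < t + d -> g y = g t + s%:~R * (y - t).

Lemma pw_loc g a b : pw g a b -> exists S : seq R,
  forall t, a < t < b -> t \notin S -> locaff g t.
Proof.
elim=> [a0|a0 c b0 s ac ha H [S IH]]; first by exists [::] => t; lra.
have cb := pw_le H.
exists (c :: S) => t /andP[h1 h2]; rewrite in_cons negb_or => /andP[tc tS].
case: (ltrgtP t c) => htc; last by rewrite htc eqxx in tc.
  have dp : 0 < Num.min (t - a0) (c - t) by rewrite lt_min; apply/andP; split; lra.
  have := lexx (Num.min (t - a0) (c - t)); rewrite le_min => /andP[d1 d2].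
  exists s, (Num.min (t - a0) (c - t)); split=> // y /andP[hy1 hy2].
  have yy : a0 <= y <= c by apply/andP; split; lra.
  have tt : a0 <= t <= c by apply/andP; split; lra.
  rewrite (ha y yy) (ha t tt); ring.
apply: IH tS; apply/andP; split; lra.
Qed.

Lemma ray_loc g a : ray g a -> exists S : seq R,
  forall t, a < t -> t \notin S -> locaff g t.
Proof.
case=> b [s [H ht]]; have [S hS] := pw_loc H.
exists (b :: S) => t h1; rewrite in_cons negb_or => /andP[tb tS].
case: (ltrgtP t b) => htb; last by rewrite htb eqxx in tb.
  by apply: hS tS; apply/andP; split.
exists s, (t - b); split; first lra.
move=> y /andP[hy1 hy2].
have yb : b <= y by lra.
have tb' : b <= t by lra.
rewrite (ht y yb) (ht t tb'); ring.
Qed.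

Lemma max_close (a b c d e : R) : `|a - c| < e -> `|b - d| < e ->
  `|Num.max a b - Num.max c d| < e.
Proof.
rewrite !ltr_norml => /andP[h1 h2] /andP[h3 h4].
case: (leP a b) => hab; case: (leP c d) => hcd; apply/andP; split; lra.
Qed.

End PW.

Section C.
Variables (R : realType) (G : tcurve R).
Implicit Types f : pt G -> R.

Definition lapl_at f (p : pt G) (n : int) : Prop :=
  match p with
  | inl (inl (inl v)) => exists (a b : E G -> int) (c : L G -> int),
     (forall e, src e = v -> slope f (fun h => edge_pt e h) (a e)) /\
     (forall e, tgt e = v -> slope f (fun h => edge_pt e (len e - h)) (b e)) /\
     (forall l, leg_at l = v -> slope f (fun h => leg_pt l h) (c l)) /\
     n = \sum_(e | src e == v) a e + \sum_(e | tgt e == v) b e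
                + \sum_(l | leg_at l == v) c l
  | inl (inl (inr (e, t))) => exists a b : int,
     slope f (fun h => edge_pt e (t + h)) a /\
     slope f (fun h => edge_pt e (t - h)) b /\ n = a + b
  | inl (inr (l, t)) => exists a b : int,
     slope f (fun h => leg_pt l (t + h)) a /\
     slope f (fun h => leg_pt l (t - h)) b /\ n = a + b
  | inr l => exists s : int, inf_slope f l s /\ n = s
  end.

Lemma is_lapP f D : is_lap f D <-> forall p, valid p -> lapl_at f p (D p).
Proof.
split.
  case=> [hV [hE [hL hI]]] [[[v|[e t]]|[l t]]|l] /= hv.
  - have [a [b [c [h1 [h2 [h3 h4]]]]]] := hV v.
    by exists a, b, c.
  - have [a [b [h1 [h2 h3]]]] := hE e t hv; by exists a, b.
  - have [a [b [h1 [h2 h3]]]] := hL l t hv; by exists a, b.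
  - have [s' [h1 h2]] := hI l; by exists s'.
move=> H; split; [|split; [|split]].
- move=> v; have [a [b [c [h1 [h2 [h3 h4]]]]]] := H (PV v) isT.
  by exists a, b, c.
- move=> e t ht; have [a [b [h1 [h2 h3]]]] := H (PE e t) ht; by exists a, b.
- move=> l t ht; have [a [b [h1 [h2 h3]]]] := H (PL l t) ht; by exists a, b.
- move=> l; have [s' [h1 h2]] := H (PInf l) isT; by exists s'.
Qed.


Lemma small2 (d1 d2 : R) : 0 < d1 -> 0 < d2 -> exists h : R, [/\ 0 < h, h < d1 & h < d2].
Proof.
move=> h1 h2; case: (leP d1 d2) => hd.
  by exists (d1 / 2); split; lra.
by exists (d2 / 2); split; lra.
Qed.

Lemma slope_uniq f gam a b : slope f gam a -> slope f gam b -> a = b.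
Proof.
case=> d1 d1p h1 [d2 d2p h2].
have [h [hp hd1 hd2]] := small2 d1p d2p.
have E1 : f (gam h) = f (gam 0) + a%:~R * h by apply: h1; rewrite hp hd1.
have E2 : f (gam h) = f (gam 0) + b%:~R * h by apply: h2; rewrite hp hd2.
rewrite E1 in E2; move/addrI: E2 => /(mulIf (lt0r_neq0 hp)); exact: intr_inj.
Qed.

Lemma inf_uniq f l a b : inf_slope f l a -> inf_slope f l b -> a = b.
Proof.
case=> M1 h1 [M2 h2]; set M := Num.max M1 M2.
have e1 : M1 <= M by rewrite le_max lexx.
have e2 : M2 <= M by rewrite le_max lexx orbT.
have E1 := h1 (M + 1); have E2 := h1 M; have E3 := h2 (M + 1); have E4 := h2 M.
have F1 := E1 ltac:(lra); have F2 := E2 e1; have F3 := E3 ltac:(lra); have F4 := E4 e2.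
apply: intr_inj; nra.
Qed.

Lemma lapl_uniq f p n m : lapl_at f p n -> lapl_at f p m -> n = m.
Proof.
case: p => [[[v|[e t]]|[l t]]|l] /=.
- case=> a [b [c [h1 [h2 [h3 ->]]]]] [a' [b' [c' [h1' [h2' [h3' ->]]]]]].
  congr (_ + _ + _); apply: eq_bigr => x /eqP hx; apply: slope_uniq.
  + exact: h1 x hx. + exact: h1' x hx.
  + exact: h2 x hx. + exact: h2' x hx.
  + exact: h3 x hx. + exact: h3' x hx.
- case=> a [b [h1 [h2 ->]]] [a' [b' [h1' [h2' ->]]]].
  by rewrite (slope_uniq h1 h1') (slope_uniq h2 h2').
- case=> a [b [h1 [h2 ->]]] [a' [b' [h1' [h2' ->]]]].
  by rewrite (slope_uniq h1 h1') (slope_uniq h2 h2').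
- case=> a [h1 ->] [a' [h1' ->]]; exact: inf_uniq h1 h1'.
Qed.

Lemma slope_ext f f' gam gam' s : (forall h, f (gam h) = f' (gam' h)) ->
  slope f gam s -> slope f' gam' s.
Proof. move=> e [d dp h]; exists d => // u hu; rewrite -!e; exact: h. Qed.

Lemma inf_ext f f' l l' s : (forall t, f (leg_pt l t) = f' (leg_pt l' t)) ->
  inf_slope f l s -> inf_slope f' l' s.
Proof. move=> e [M h]; exists M => t ht; rewrite -!e; exact: h. Qed.

Lemma slope_cmp f g h gam a c : (forall x, h x = Num.max (f x) (g x)) ->
  slope f gam a -> slope h gam c -> g (gam 0) <= f (gam 0) -> a <= c.
Proof.
move=> eh [d1 d1p h1] [d2 d2p h2] hle.
have [u [up ud1 ud2]] := small2 d1p d2p.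
have E1 : f (gam u) = f (gam 0) + a%:~R * u by apply: h1; rewrite up ud1.
have E2 : h (gam u) = h (gam 0) + c%:~R * u by apply: h2; rewrite up ud2.
have E3 : f (gam u) <= h (gam u) by rewrite eh le_max lexx.
rewrite [h (gam 0)]eh (max_l hle) in E2.
rewrite -(ler_int R); nra.
Qed.

Definition mx (x y : R) (a b : int) : int :=
  if y < x then a else if x < y then b else Num.max a b.

Lemma slope_dom f g gam a b : slope f gam a -> slope g gam b -> g (gam 0) < f (gam 0) ->
  exists2 d : R, 0 < d & forall u, 0 < u < d -> g (gam u) < f (gam u) /\
     f (gam u) = f (gam 0) + a%:~R * u.
Proof.
move=> [d1 d1p h1] [d2 d2p h2] hlt.
set k := (b%:~R - a%:~R : R).
set d3 := if k <= 0 then 1 else (f (gam 0) - g (gam 0)) / k.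
have d3p : 0 < d3.
  rewrite /d3; case: ifP => hk //; apply: divr_gt0; lra.
have d3k : 0 < k -> k * d3 = f (gam 0) - g (gam 0).
  move=> kp; rewrite /d3 ifN; last by rewrite -ltNge.
  by rewrite mulrC divfK // gt_eqF.
exists (Num.min d1 (Num.min d2 d3)); first by rewrite !lt_min d1p d2p d3p.
move=> u /andP[up]; rewrite !lt_min => /andP[ud1 /andP[ud2 ud3]].
have E1 : f (gam u) = f (gam 0) + a%:~R * u by apply: h1; rewrite up ud1.
have E2 : g (gam u) = g (gam 0) + b%:~R * u by apply: h2; rewrite up ud2.
split=> //; rewrite E1 E2.
case: (lerP k 0) => hk.
  rewrite /k in hk; nra.
have := d3k hk; rewrite /k; nra.
Qed.

Lemma slope_max f g h gam a b : (forall x, h x = Num.max (f x) (g x)) ->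
  slope f gam a -> slope g gam b ->
  slope h gam (mx (f (gam 0)) (g (gam 0)) a b).
Proof.
move=> eh sf sg; rewrite /mx.
case: (ltrgtP (g (gam 0)) (f (gam 0))) => c0.
- have [d dp hd] := slope_dom sf sg c0.
  exists d => // u hu; have [l1 l2] := hd u hu.
  by rewrite !eh (max_l (ltW l1)) (max_l (ltW c0)).
- have [d dp hd] := slope_dom sg sf c0.
  exists d => // u hu; have [l1 l2] := hd u hu.
  by rewrite !eh (max_r (ltW l1)) (max_r (ltW c0)).
- case: sf sg => [d1 d1p h1] [d2 d2p h2].
  have [d [dp dd1 dd2]] := small2 d1p d2p.
  exists d => // u /andP[up ud].
  have E1 : f (gam u) = f (gam 0) + a%:~R * u by apply: h1; rewrite up; lra.
  have E2 : g (gam u) = g (gam 0) + b%:~R * u by apply: h2; rewrite up; lra.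
  rewrite !eh E1 E2 c0 maxxx.
  case: (leP a b) => hab.
    have hab' : (a%:~R : R) <= b%:~R by rewrite ler_int.
    rewrite max_r //; nra.
  have hab' : (b%:~R : R) < a%:~R by rewrite ltr_int.
  rewrite max_l //; nra.
Qed.

Lemma inf0 f l s : rational f -> inf_slope f l s -> s = 0.
Proof.
case=> _ /(_ l) [_ hc] [M hM].
have [M' hM'] := hc 1 ltr01.
set T := Num.max M M'.
have e1 : M <= T by rewrite le_max lexx.
have e2 : M' <= T by rewrite le_max lexx orbT.
have F1 := hM T e1; have F2 := hM (T + 2) ltac:(lra).
have G1 := hM' T e2; have G2 := hM' (T + 2) ltac:(lra).
move: G1 G2; rewrite !ltr_norml F1 F2 => /andP[g1 g2] /andP[g3 g4].
have H1 : s < 1 by rewrite -(ltr_int R); nra.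
have H2 : -1 < s by rewrite -(ltr_int R); nra.
lia.
Qed.

Lemma edge_pt0 (e : E G) : edge_pt e 0 = PV (src e).
Proof. by rewrite /edge_pt lexx. Qed.

Lemma edge_ptL (e : E G) : edge_pt e (len e - 0) = PV (tgt e).
Proof. by rewrite /edge_pt subr0 lexx leNgt len_gt0. Qed.

Lemma leg_pt0 (l : L G) : leg_pt l 0 = PV (leg_at l).
Proof. by rewrite /leg_pt lexx. Qed.

Lemma edge_ptI (e : E G) t : 0 < t < len e -> edge_pt e t = PE e t.
Proof. by case/andP=> h1 h2; rewrite /edge_pt leNgt h1 leNgt h2. Qed.

Lemma leg_ptI (l : L G) t : 0 < t -> leg_pt l t = PL l t.
Proof. by move=> h; rewrite /leg_pt leNgt h. Qed.

Lemma lapl_cmp f g h p a c : (forall x, h x = Num.max (f x) (g x)) ->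
  rational f -> rational h -> valid p ->
  lapl_at f p a -> lapl_at h p c -> g p <= f p -> a <= c.
Proof.
move=> eh rf rh; case: p => [[[v|[e t]]|[l t]]|l] /= hv.
- case=> a1 [b1 [c1 [h1 [h2 [h3 ->]]]]] [a2 [b2 [c2 [h1' [h2' [h3' ->]]]]]] hle.
  apply: lerD; first apply: lerD.
  + apply: ler_sum => x /eqP hx; apply: slope_cmp eh (h1 x hx) (h1' x hx) _.
    by rewrite /= edge_pt0 hx.
  + apply: ler_sum => x /eqP hx; apply: slope_cmp eh (h2 x hx) (h2' x hx) _.
    by rewrite /= edge_ptL hx.
  + apply: ler_sum => x /eqP hx; apply: slope_cmp eh (h3 x hx) (h3' x hx) _.
    by rewrite /= leg_pt0 hx.
- case=> a1 [b1 [h1 [h2 ->]]] [a2 [b2 [h1' [h2' ->]]]] hle.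
  apply: lerD.
  + by apply: slope_cmp eh h1 h1' _; rewrite /= addr0 edge_ptI.
  + by apply: slope_cmp eh h2 h2' _; rewrite /= subr0 edge_ptI.
- case=> a1 [b1 [h1 [h2 ->]]] [a2 [b2 [h1' [h2' ->]]]] hle.
  apply: lerD.
  + by apply: slope_cmp eh h1 h1' _; rewrite /= addr0 leg_ptI.
  + by apply: slope_cmp eh h2 h2' _; rewrite /= subr0 leg_ptI.
- case=> a1 [h1 ->] [a2 [h2 ->]] _.
  by rewrite (inf0 rf h1) (inf0 rh h2).
Qed.

Lemma lapl_ex f g h p a b : (forall x, h x = Num.max (f x) (g x)) ->
  rational f -> rational g ->
  lapl_at f p a -> lapl_at g p b -> exists c, lapl_at h p c.
Proof.
move=> eh rf rg; case: p => [[[v|[e t]]|[l t]]|l] /=.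
- case=> a1 [b1 [c1 [h1 [h2 [h3 _]]]]] [a2 [b2 [c2 [h1' [h2' [h3' _]]]]]].
  eexists; exists (fun e => mx (f (edge_pt e 0)) (g (edge_pt e 0)) (a1 e) (a2 e)),
    (fun e => mx (f (edge_pt e (len e - 0))) (g (edge_pt e (len e - 0))) (b1 e) (b2 e)),
    (fun l => mx (f (leg_pt l 0)) (g (leg_pt l 0)) (c1 l) (c2 l)).
  split; [|split; [|split]]; last reflexivity.
  + move=> x hx; exact: slope_max eh (h1 x hx) (h1' x hx).
  + move=> x hx; exact: slope_max eh (h2 x hx) (h2' x hx).
  + move=> x hx; exact: slope_max eh (h3 x hx) (h3' x hx).
- case=> a1 [b1 [h1 [h2 _]]] [a2 [b2 [h1' [h2' _]]]].
  eexists; do 2 eexists; split; [exact: slope_max eh h1 h1'|split; [exact: slope_max eh h2 h2'|reflexivity]].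
- case=> a1 [b1 [h1 [h2 _]]] [a2 [b2 [h1' [h2' _]]]].
  eexists; do 2 eexists; split; [exact: slope_max eh h1 h1'|split; [exact: slope_max eh h2 h2'|reflexivity]].
- case=> a1 [h1 _] [a2 [h2 _]].
  have z1 := inf0 rf h1; have z2 := inf0 rg h2; subst a1 a2.
  case: h1 h2 => [M1 e1] [M2 e2].
  set M := Num.max M1 M2.
  have m1 : M1 <= M by rewrite le_max lexx.
  have m2 : M2 <= M by rewrite le_max lexx orbT.
  exists 0, 0; split=> //; exists M => t ht.
  have t1 : M1 <= t by apply: le_trans m1 ht.
  have t2 : M2 <= t by apply: le_trans m2 ht.
  rewrite !eh (e1 t t1) (e1 M m1) (e2 t t2) (e2 M m2).
  by rewrite !mul0r !subr0.
Qed.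

Variable s : real_structure G.
Notation io := (iota s).

Lemma sE_inv e : sE s (sE s e) = e.
Proof.
have := act_invol s (PE e 0); rewrite /act_pt /PE; by case.
Qed.
Lemma sV_inv v : sV s (sV s v) = v.
Proof. have := act_invol s (PV v); rewrite /act_pt /PV; by case. Qed.
Lemma sL_inv l : sL s (sL s l) = l.
Proof. have := act_invol s (PInf l); rewrite /act_pt /PInf; by case. Qed.

Lemma sE_inj : injective (sE s). Proof. exact: can_inj sE_inv. Qed.
Lemma sV_inj : injective (sV s). Proof. exact: can_inj sV_inv. Qed.
Lemma sL_inj : injective (sL s). Proof. exact: can_inj sL_inv. Qed.

Lemma le_F (x y : R) : y < x -> (x <= y) = false.
Proof. by move=> h; apply/negbTE; rewrite -ltNge. Qed.
Lemma le_T (x y : R) : x <= y -> (x <= y) = true.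
Proof. by []. Qed.

Lemma iota_edge e t : io (edge_pt e t) =
  if flip s e then edge_pt (sE s e) (len e - t) else edge_pt (sE s e) t.
Proof.
have hl := sE_len s e; have he := sE_ends s e; have lp := len_gt0 e.
rewrite /iota /edge_pt hl.
move: he; case hf: (flip s e) => -[h1 h2].
- case: (lerP t 0) => ht.
    have c1 : (len e - t <= 0) = false by apply: le_F; lra.
    have c2 : (len e <= len e - t) = true by apply: le_T; lra.
    by rewrite c1 c2 /= h2.
  case: (lerP (len e) t) => ht2.
    have c1 : (len e - t <= 0) = true by apply: le_T; lra.
    by rewrite c1 /= h1.
  have c1 : (len e - t <= 0) = false by apply: le_F; lra.
  have c2 : (len e <= len e - t) = false by apply: le_F; lra.
  by rewrite c1 c2 /= hf.
- case: (lerP t 0) => ht; first by rewrite /= h1.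
  case: (lerP (len e) t) => ht2; first by rewrite /= h2.
  by rewrite /= hf.
Qed.

Lemma iota_leg l t : io (leg_pt l t) = leg_pt (sL s l) t.
Proof.
rewrite /iota /leg_pt; case: ifP => ht /=; last by [].
by rewrite sL_at.
Qed.

Lemma valid_iota p : valid (io p) = valid p.
Proof.
case: p => [[[v|[e t]]|[l t]]|l] //=.
rewrite sE_len; case: ifP => // _.
apply/idP/idP => /andP[h1 h2]; apply/andP; split; lra.
Qed.

Definition a' (a b : E G -> int) e := if flip s e then b (sE s e) else a (sE s e).
Definition b' (a b : E G -> int) e := if flip s e then a (sE s e) else b (sE s e).

Lemma sum_sym v (a b : E G -> int) (c : L G -> int) :
  \sum_(e | src e == sV s v) a e + \sum_(e | tgt e == sV s v) b e
     + \sum_(l | leg_at l == sV s v) c l =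
  \sum_(e | src e == v) a' a b e + \sum_(e | tgt e == v) b' a b e
     + \sum_(l | leg_at l == v) c (sL s l).
Proof.
congr (_ + _).
  rewrite (big_mkcond (fun e => src e == sV s v)) (big_mkcond (fun e => tgt e == sV s v)).
  rewrite (big_mkcond (fun e => src e == v)) (big_mkcond (fun e => tgt e == v)).
  rewrite -big_split -big_split /=.
  rewrite (reindex_inj sE_inj) /=; apply: eq_bigr => e _.
  rewrite /a' /b'; have := sE_ends s e; case: (flip s e) => -[-> ->];
    rewrite !(inj_eq sV_inj) // addrC //.
rewrite (reindex_inj sL_inj) /=; apply: eq_bigl => l.
by rewrite sL_at (inj_eq sV_inj).
Qed.

Lemma lapl_sym f p n : lapl_at f (io p) n -> lapl_at (fun x => f (io x)) p n.
Proof.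
case: p => [[[v|[e t]]|[l t]]|l] /=.
- case=> a [b [c [h1 [h2 [h3 ->]]]]].
  exists (a' a b), (b' a b), (fun l => c (sL s l)).
  split; [|split; [|split]]; last exact: sum_sym.
  + move=> e he; rewrite /a'; have := sE_ends s e.
    case hf: (flip s e) => -[e1 e2].
      apply: (slope_ext _ (h2 (sE s e) _)); last by rewrite e2 he.
      by move=> h /=; rewrite iota_edge hf (sE_len s e).
    apply: (slope_ext _ (h1 (sE s e) _)); last by rewrite e1 he.
    by move=> h /=; rewrite iota_edge hf.
  + move=> e he; rewrite /b'; have := sE_ends s e.
    case hf: (flip s e) => -[e1 e2].
      apply: (slope_ext _ (h1 (sE s e) _)); last by rewrite e1 he.
      by move=> h /=; rewrite iota_edge hf; congr (f (edge_pt _ _)); ring.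
    apply: (slope_ext _ (h2 (sE s e) _)); last by rewrite e2 he.
    by move=> h /=; rewrite iota_edge hf (sE_len s e).
  + move=> l hl; apply: (slope_ext _ (h3 (sL s l) _)); last by rewrite sL_at hl.
    by move=> h /=; rewrite iota_leg.
- case hf: (flip s e) => /=; case=> a [b [h1 [h2 ->]]].
    exists b, a; split; [|split; [|by rewrite addrC]].
      apply: (slope_ext _ h2) => h /=; rewrite iota_edge hf; congr (f (edge_pt _ _)); ring.
    apply: (slope_ext _ h1) => h /=; rewrite iota_edge hf; congr (f (edge_pt _ _)); ring.
  exists a, b; split; [|split; [|by []]].
    by apply: (slope_ext _ h1) => h /=; rewrite iota_edge hf.
  by apply: (slope_ext _ h2) => h /=; rewrite iota_edge hf.
- case=> a [b [h1 [h2 ->]]]; exists a, b; split; [|split; [|by []]].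
    by apply: (slope_ext _ h1) => h /=; rewrite iota_leg.
  by apply: (slope_ext _ h2) => h /=; rewrite iota_leg.
- case=> a [h1 ->]; exists a; split=> //.
  by apply: (inf_ext _ h1) => t /=; rewrite iota_leg.
Qed.

Lemma rational_sym f : rational f -> rational (fun x => f (io x)).
Proof.
case=> hE hL; split.
  move=> e; have := hE (sE s e); rewrite (sE_len s e).
  case hf: (flip s e).
    move/pw_of/(pw_refl (len e)); rewrite subrr subr0 => H.
    apply: of_pw; apply: (pw_ext H) => y _ /=; by rewrite iota_edge hf.
  move=> H; have -> : (fun t => f (io (edge_pt e t))) = (fun t => f (edge_pt (sE s e) t)).
    by apply: functional_extensionality => t; rewrite iota_edge hf.
  exact: H.
move=> l; have [H1 H2] := hL (sL s l).
have -> : (fun t => f (io (leg_pt l t))) = (fun t => f (leg_pt (sL s l) t)).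
  by apply: functional_extensionality => t; rewrite iota_leg.
split=> // eps ep; have [M hM] := H2 eps ep; exists M => t ht.
rewrite iota_leg; exact: hM.
Qed.

Definition hmax f g := fun x => Num.max (f x) (g x).

Lemma rational_max f g : rational f -> rational g -> rational (hmax f g).
Proof.
case=> fE fL [gE gL]; split.
  move=> e; apply: of_pw; exact: (max_pw (pw_of (fE e)) (pw_of (gE e))).
move=> l; have [f1 f2] := fL l; have [g1 g2] := gL l; split.
  apply: of_ray; exact: (ray_max (ray_of f1) (ray_of g1)).
move=> eps ep; have [M1 h1] := f2 eps ep; have [M2 h2] := g2 eps ep.
exists (Num.max M1 M2) => t ht; apply: max_close.
  apply: h1; apply: le_trans ht; by rewrite le_max lexx.
apply: h2; apply: le_trans ht; by rewrite le_max lexx orbT.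
Qed.

Lemma loc_zero (F : R -> R) t (P : R -> pt G) h a b :
  (forall u, h (P u) = F u) -> locaff F t ->
  slope h (fun u => P (t + u)) a -> slope h (fun u => P (t - u)) b -> a + b = 0.
Proof.
move=> eF [c [d [dp hd]]] sa sb.
have s1 : slope h (fun u => P (t + u)) c.
  exists d => // u /andP[u0 ud]; rewrite /= !eF addr0 hd; last by apply/andP; split; lra.
  by congr (_ + _); congr (_ * _); ring.
have s2 : slope h (fun u => P (t - u)) (- c).
  exists d => // u /andP[u0 ud]; rewrite /= !eF subr0 hd; last by apply/andP; split; lra.
  by rewrite mulrNz; congr (_ + _); ring.
by rewrite (slope_uniq sa s1) (slope_uniq sb s2) subrr.
Qed.

Lemma lap_fin h : rational h ->
  exists (SE : E G -> seq R) (SL : L G -> seq R),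
  (forall e t n, 0 < t < len e -> t \notin SE e -> lapl_at h (PE e t) n -> n = 0) /\
  (forall l t n, 0 < t -> t \notin SL l -> lapl_at h (PL l t) n -> n = 0).
Proof.
case=> hE hL.
have H1 : forall e, exists S : seq R, forall t, 0 < t < len e -> t \notin S ->
    locaff (fun u => h (edge_pt e u)) t.
  move=> e; exact: pw_loc (pw_of (hE e)).
have H2 : forall l, exists S : seq R, forall t, 0 < t -> t \notin S ->
    locaff (fun u => h (leg_pt l u)) t.
  move=> l; exact: ray_loc (ray_of (hL l).1).
exists (fun e => proj1_sig (constructive_indefinite_description _ (H1 e))).
exists (fun l => proj1_sig (constructive_indefinite_description _ (H2 l))).
split.
  move=> e t n ht hS [a [b [sa [sb ->]]]].
  case: (constructive_indefinite_description _ (H1 e)) hS => S /= hS tS.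
  exact: loc_zero (fun u => erefl) (hS t ht tS) sa sb.
move=> l t n ht hS [a [b [sa [sb ->]]]].
case: (constructive_indefinite_description _ (H2 l)) hS => S /= hS tS.
exact: loc_zero (fun u => erefl) (hS t ht tS) sa sb.
Qed.

Lemma io_invol p : io (io p) = p.
Proof. exact: act_invol. Qed.

Lemma main_real (D D' Ef : pt G -> int) : is_div D -> is_real s D ->
  in_linsys D D' -> (forall p, Ef p <= D' p) -> effective Ef -> is_div Ef ->
  is_real s Ef ->
  exists D'', [/\ in_linsys D D'', is_real s D'' & forall p, Ef p <= D'' p].
Proof.
move=> [[sD hsD] hDv] rD [_ _ [f [rf lf]]] hED' effE [_ hEv] rE.
pose g := fun x => f (io x).
pose h := hmax f g.
have eh : forall x, h x = Num.max (f x) (g x) by [].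
have rg : rational g := rational_sym rf.
have rh : rational h := rational_max rf rg.
have Lf := (proj1 (is_lapP f _)) lf.
have Lg : forall p, valid p -> lapl_at g p (D' (io p) - D (io p)).
  move=> p vp; apply: lapl_sym; apply: Lf; by rewrite valid_iota.
have exh : forall p, exists n, valid p -> lapl_at h p n.
  move=> p; case vp: (valid p); last by exists 0.
  have [n hn] := lapl_ex eh rf rg (Lf p vp) (Lg p vp).
  by exists n.
pose Lc := fun p => proj1_sig (constructive_indefinite_description _ (exh p)).
have hLc : forall p, valid p -> lapl_at h p (Lc p).
  move=> p vp; rewrite /Lc.
  case: (constructive_indefinite_description _ (exh p)) => n /= hn; exact: hn vp.
clearbody Lc.
pose Lh := fun p => if valid p then Lc p else 0.
have hLh : forall p, valid p -> lapl_at h p (Lh p).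
  move=> p vp; rewrite /Lh vp; exact: hLc.
have Lh0 : forall p, ~~ valid p -> Lh p = 0 by move=> p /negbTE vp; rewrite /Lh vp.
have hio : (fun x => h (io x)) = h.
  apply: functional_extensionality => x.
  by rewrite /h /hmax /g io_invol maxC.
have Lhio : forall p, Lh (io p) = Lh p.
  move=> p; case vp: (valid p); last by rewrite !Lh0 ?valid_iota ?vp.
  apply: (lapl_uniq (f:=h) (p:=p)); last exact: hLh.
  have := lapl_sym (hLh (io p) _); rewrite hio; apply; by rewrite valid_iota.
pose D'' := fun p => D p + Lh p.
have geE : forall p, Ef p <= D'' p.
  move=> p; case vp: (valid p); last first.
    by rewrite /D'' hEv ?vp // hDv ?vp // Lh0 ?vp.
  case: (lerP (g p) (f p)) => c.
    have := lapl_cmp eh rf rh vp (Lf p vp) (hLh p vp) c.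
    move: (hED' p); rewrite /D''; lia.
  have eh' : forall x, h x = Num.max (g x) (f x) by move=> x; rewrite eh maxC.
  have := lapl_cmp eh' rg rh vp (Lg p vp) (hLh p vp) (ltW c).
  move: (hED' (io p)); rewrite rE rD /D''; lia.
exists D''; split=> //.
- split.
  + split.
      have [SE [SL [hSE hSL]]] := lap_fin rh.
      exists (sD ++ [seq PV v | v <- enum (V G)] ++ [seq PInf l | l <- enum (L G)]
        ++ flatten [seq [seq PE e t | t <- SE e] | e <- enum (E G)]
        ++ flatten [seq [seq PL l t | t <- SL l] | l <- enum (L G)]).
      move=> p; rewrite /D'' !mem_cat.
      case: (eqVneq (D p) 0) => Dp; last by rewrite hsD.
      rewrite Dp add0r => Lp.
      case vp: (valid p); last by rewrite Lh0 ?vp ?eqxx in Lp.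
      move: vp Lp (hLh p vp); clear Dp; case: p => [[[v|[e t]]|[l t]]|l] vp Lp Hl.
      * by rewrite map_f ?orbT // mem_enum.
      * apply/orP; right; apply/orP; right; apply/orP; right; apply/orP; left.
        apply/flatten_mapP; exists e; first by rewrite mem_enum.
        apply: map_f; apply/negPn/negP => tS.
        by rewrite (hSE e t _ vp tS Hl) eqxx in Lp.
      * apply/orP; right; apply/orP; right; apply/orP; right; apply/orP; right.
        apply/flatten_mapP; exists l; first by rewrite mem_enum.
        apply: map_f; apply/negPn/negP => tS.
        by rewrite (hSL l t _ vp tS Hl) eqxx in Lp.
      * by rewrite map_f ?orbT // mem_enum.
    by move=> p vp; rewrite /D'' hDv // Lh0.
  + move=> p; apply: le_trans (geE p); exact: effE.
  + exists h; split=> //; apply/is_lapP => p vp.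
    by rewrite /D'' addrAC subrr add0r; exact: hLh.
- by move=> p; rewrite /D'' rD Lhio.
Qed.

End C.

Unset Implicit Arguments.
Set Strict Implicit.

Theorem proposition6 (R : realType) (G : tcurve R) (s : real_structure G)
  (D : pt G -> int) (r : nat) :
  is_div D -> is_real s D -> (1 <= r)%N -> dim_ge D r ->
  forall Ef : pt G -> int,
    is_div Ef -> effective Ef -> is_real s Ef -> deg_is Ef r%:Z ->
    exists D' : pt G -> int,
      [/\ in_linsys D D', is_real s D' & forall p, Ef p <= D' p].
Proof.
move=> hD rD r1 [_ [r0 [rr0 hrank]]] Ef hE effE rE [sE [us hs sumE]].
have [p0 Ep0] : exists p0, Ef p0 != 0.
  apply/not_all_not_ex => H.
  have : \sum_(p <- sE) Ef p = 0 by apply: big1_seq => p _; apply/eqP/negPn/negP; exact: H.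
  rewrite sumE => /eqP; rewrite eqz_nat; lia.
have p0in := hs p0 Ep0.
have vp0 : valid p0.
  apply/negPn/negP => nv; have [_ hv] := hE; by rewrite hv ?eqxx in Ep0.
pose k := ((r0 - r)%N)%:Z.
pose E' := fun p => Ef p + (if p == p0 then k else 0).
have hE' : is_div E'.
  split; first exists sE => p; rewrite /E'.
    case: (eqVneq p p0) => [-> _ //|_]; rewrite addr0; exact: hs.
  move=> p vp; have [_ hv] := hE; rewrite /E' hv //.
  case: eqP => [e|]; last by rewrite addr0.
  by rewrite e vp0 in vp.
have eff' : effective E'.
  move=> p; rewrite /E'; apply: addr_ge0; first exact: effE.
  by case: eqP.
have deg' : deg_is E' r0%:Z.
  exists sE; split=> //.
    move=> p; rewrite /E'; case: (eqVneq p p0) => [-> _ //|_]; rewrite addr0; exact: hs.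
  rewrite big_split /= sumE -big_mkcond /= big_const_seq.
  have -> : count (fun p => p == p0) sE = 1%N.
    by have := count_uniq_mem p0 us; rewrite p0in.
  rewrite /= addr0 /k; apply/eqP; rewrite -PoszD eqz_nat; apply/eqP.
  by rewrite subnKC.
have [D' [hD' le']] := hrank E' hE' eff' deg'.
have le2 : forall p, Ef p <= D' p.
  move=> p; apply: le_trans (le' p); rewrite /E' lerDl; by case: eqP.
exact: main_real hD rD hD' le2 effE hE rE.
Qed.
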